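(* For every integer $m\geq 1$, $$A_{2,m}=\frac{(m-1)m(m+1)(m+\lambda)(m+\lambda+1)(m+\lambda+2)\big[m^2+(\lambda+1)m+\frac{4\lambda^2+2\lambda-14}{3(2\lambda+3)}\big]}{2(2\lambda+1)(2\lambda+5)}$$ and $$\widetilde A_{2,m}=\frac{(m-1)m(m+\lambda)(m+\lambda+1)\,r_\lambda(m)}{24(2\lambda+1)(2\lambda+3)(2\lambda+5)},$$ where $$r_\lambda(m)=12(2\lambda+3)m^4+24\lambda(2\lambda+3)m^3+4(6\lambda^3+7\lambda^2-19\lambda-32)m^2-4\lambda(2\lambda^2+19\lambda+32)m-8\lambda^3-20\lambda^2+14\lambda+71.$$
   Context: Fix $\lambda>-1/2$. Define polynomials $Q_m$ by $Q_0=1$, $Q_1(\mu)=1-\frac{2(\lambda+1)(\lambda+2)}{2\lambda+1}\mu$ and, for $m\geq2$, $$Q_m-Q_{m-1}=\frac{m(2m-1)(2m+\lambda)}{(m-1+\lambda)(2m-2+\lambda)(2m-1+2\lambda)}\big[Q_{m-1}-Q_{m-2}\big]-\frac{2m(2m-1+\lambda)(2m+\lambda)}{2m-1+2\lambda}\,\mu\,Q_{m-1}(\mu).$$ Define $\widetilde Q_m$ by $\widetilde Q_0=1$, $\widetilde Q_1(\mu)=1-\frac{\lambda+1}{2}\mu$ and, for $m\geq2$, $$\widetilde Q_m-\widetilde Q_{m-1}=\frac{(m-1)(2m-1)(2m-1+\lambda)}{(m-1+\lambda)(2m-3+\lambda)(2m-3+2\lambda)}\big[\widetilde Q_{m-1}-\widetilde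 Q_{m-2}\big]-\frac{(2m-1)(2m-2+\lambda)(2m-1+\lambda)}{2(m-1+\lambda)}\,\mu\,\widetilde Q_{m-1}(\mu).$$ Write $Q_m(\mu)=\sum_{i=0}^m(-1)^iA_{i,m}\mu^i$ and $\widetilde Q_m(\mu)=\sum_{i=0}^m(-1)^i\widetilde A_{i,m}\mu^i$, with $A_{i,m}=\widetilde A_{i,m}=0$ for $i>m$. *)

(* Defs.v *)
From mathcomp Require Import all_boot all_order all_algebra.
Set Implicit Arguments. Unset Strict Implicit. Unset Printing Implicit Defensive.
Import Order.TTheory GRing.Theory Num.Theory.
Local Open Scope ring_scope.

Section Qdefs.
Variable R : realFieldType.
Variable l : R.

Definition qc1 (m : nat) : R :=
  (m%:R * (2 * m%:R - 1) * (2 * m%:R + l)) /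
  ((m%:R - 1 + l) * (2 * m%:R - 2 + l) * (2 * m%:R - 1 + 2 * l)).
Definition qc2 (m : nat) : R :=
  (2 * m%:R * (2 * m%:R - 1 + l) * (2 * m%:R + l)) / (2 * m%:R - 1 + 2 * l).

Definition tc1 (m : nat) : R :=
  ((m%:R - 1) * (2 * m%:R - 1) * (2 * m%:R - 1 + l)) /
  ((m%:R - 1 + l) * (2 * m%:R - 3 + l) * (2 * m%:R - 3 + 2 * l)).
Definition tc2 (m : nat) : R :=
  ((2 * m%:R - 1) * (2 * m%:R - 2 + l) * (2 * m%:R - 1 + l)) / (2 * (m%:R - 1 + l)).

(* generic three-term recurrence: returns (P_n, P_{n+1}) where
   P_m = P_{m-1} + c1 m * (P_{m-1} - P_{m-2}) - c2 m * 'X * P_{m-1} for m >= 2 *)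
Fixpoint rec_pair (P0 P1 : {poly R}) (c1 c2 : nat -> R) (n : nat)
  : {poly R} * {poly R} :=
  match n with
  | 0 => (P0, P1)
  | k.+1 => let: (a, b) := rec_pair P0 P1 c1 c2 k in
            (b, b + c1 k.+2 *: (b - a) - c2 k.+2 *: ('X * b))
  end.

Definition Q (m : nat) : {poly R} :=
  (rec_pair 1 (1 - ((2 * (l + 1) * (l + 2)) / (2 * l + 1)) *: 'X) qc1 qc2 m).1.

Definition Qt (m : nat) : {poly R} :=
  (rec_pair 1 (1 - ((l + 1) / 2) *: 'X) tc1 tc2 m).1.

(* Q_m = sum_i (-1)^i A_{i,m} mu^i ; coefficients beyond the degree are 0 *)
Definition A (i m : nat) : R := (-1) ^+ i * (Q m)`_i.
Definition At (i m : nat) : R := (-1) ^+ i * (Qt m)`_i.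

Definition r_l (m : R) : R :=
  12 * (2 * l + 3) * m ^+ 4 + 24 * l * (2 * l + 3) * m ^+ 3
  + 4 * (6 * l ^+ 3 + 7 * l ^+ 2 - 19 * l - 32) * m ^+ 2
  - 4 * l * (2 * l ^+ 2 + 19 * l + 32) * m
  - 8 * l ^+ 3 - 20 * l ^+ 2 + 14 * l + 71.

End Qdefs.

(* Main.v *)
Require Import Defs.
From mathcomp Require Import all_boot all_order all_algebra.
From mathcomp Require Import ring lra.
Import Order.TTheory GRing.Theory Num.Theory.
Local Open Scope ring_scope.

Lemma rec_coef (R : realFieldType) (P0 P1 : {poly R}) (c1 c2 : nat -> R)
  (f0 f1 f2 : nat -> R) :
  P0`_0 = f0 0 -> P0`_1 = f1 0 -> P0`_2 = f2 0 ->
  P1`_0 = f0 1 -> P1`_1 = f1 1 -> P1`_2 = f2 1 ->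
  (forall k, f0 k.+2 = f0 k.+1 + c1 k.+2 * (f0 k.+1 - f0 k)) ->
  (forall k, f1 k.+2 = f1 k.+1 + c1 k.+2 * (f1 k.+1 - f1 k) - c2 k.+2 * f0 k.+1) ->
  (forall k, f2 k.+2 = f2 k.+1 + c1 k.+2 * (f2 k.+1 - f2 k) - c2 k.+2 * f1 k.+1) ->
  forall n, [/\ (rec_pair P0 P1 c1 c2 n).1`_0 = f0 n,
               (rec_pair P0 P1 c1 c2 n).1`_1 = f1 n &
               (rec_pair P0 P1 c1 c2 n).1`_2 = f2 n] /\
             [/\ (rec_pair P0 P1 c1 c2 n).2`_0 = f0 n.+1,
               (rec_pair P0 P1 c1 c2 n).2`_1 = f1 n.+1 &
               (rec_pair P0 P1 c1 c2 n).2`_2 = f2 n.+1].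
Proof.
move=> h00 h01 h02 h10 h11 h12 r0 r1 r2.
elim=> [|n IH] /=; first by split; split.
case: (rec_pair P0 P1 c1 c2 n) IH => a b /= [[a0 a1 a2] [b0 b1 b2]].
split; split => //; rewrite !(coefD, coefB, coefN, coefZ, coefXM) /=.
- by rewrite a0 b0 r0 mulr0 oppr0 addr0.
- by rewrite a1 b1 b0 r1.
- by rewrite a2 b2 b1 r2.
Qed.

Section Main.
Variable R : realFieldType.
Variable l : R.
Hypothesis hl : - (1 / 2) < l.

Definition qf0 (n : nat) : R := 1.
Definition qf1 (n : nat) : R := let x := n%:R in
  - (x * (x + 1) * (x + l) * (x + l + 1) / (2 * l + 1)).
Definition qf2 (n : nat) : R := let x : R := n%:R in
    ((x - 1) * x * (x + 1) * (x + l) * (x + l + 1) * (x + l + 2)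
     * (x ^+ 2 + (l + 1) * x
        + (4 * l ^+ 2 + 2 * l - 14) / (3 * (2 * l + 3))))
    / (2 * (2 * l + 1) * (2 * l + 5)).

Lemma natS2 k : (k.+2)%:R = k%:R + 2 :> R.
Proof. by rewrite -addn2 natrD. Qed.
Lemma natS1 k : (k.+1)%:R = k%:R + 1 :> R.
Proof. by rewrite -addn1 natrD. Qed.

Ltac side := repeat (apply/andP; split);
  try solve [ match goal with H : is_true (_ != 0) |- _ => exact H end ];
  try (have hl2 := hl; apply/negP => /eqP ?; lra).

Lemma nzh (x : R) : 0 <= x ->
  [/\ 2 * l + 1 != 0, 2 * l + 3 != 0, 2 * l + 5 != 0, 3 != 0 :> R & 24 != 0 :> R] /\
  [/\ x + 2 - 1 + l != 0, 2 * (x + 2) - 2 + l != 0, 2 * (x + 2) - 1 + 2 * l != 0,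
      2 * (x + 2) - 3 + l != 0 & 2 * (x + 2) - 3 + 2 * l != 0] /\ (2 != 0 :> R).
Proof.
move=> hx; have hl2 := hl; split; [split|split; [split|]]; apply/negP => /eqP ?; lra.
Qed.

Lemma qr1 k : qf1 k.+2 = qf1 k.+1 + qc1 l k.+2 * (qf1 k.+1 - qf1 k) - qc2 l k.+2 * qf0 k.+1.
Proof.
rewrite /qf1 /qf0 /qc1 /qc2 (natS2 k) (natS1 k).
have := ler0n R k; move: (k%:R) => x hx.
have [[? ? ? ? ?] [[? ? ? ? ?] ?]] := nzh _ hx.
by field; side.
Qed.

Lemma qr2 k : qf2 k.+2 = qf2 k.+1 + qc1 l k.+2 * (qf2 k.+1 - qf2 k) - qc2 l k.+2 * qf1 k.+1.
Proof.
rewrite /qf2 /qf1 /qc1 /qc2 (natS2 k) (natS1 k).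
have := ler0n R k; move: (k%:R) => x hx.
have [[? ? ? ? ?] [[? ? ? ? ?] ?]] := nzh _ hx.
by field; side.
Qed.

Definition tf1 (n : nat) : R := let x := n%:R in
  - (x * (x + l) * (2 * x ^+ 2 + 2 * l * x - 1) / (2 * (2 * l + 1))).
Definition tf2 (n : nat) : R := let x : R := n%:R in
    ((x - 1) * x * (x + l) * (x + l + 1) * r_l l x)
    / (24 * (2 * l + 1) * (2 * l + 3) * (2 * l + 5)).

Lemma tr1 k : tf1 k.+2 = tf1 k.+1 + tc1 l k.+2 * (tf1 k.+1 - tf1 k) - tc2 l k.+2 * qf0 k.+1.
Proof.
rewrite /tf1 /qf0 /tc1 /tc2 (natS2 k) (natS1 k).
have := ler0n R k; move: (k%:R) => x hx.
have [[? ? ? ? ?] [[? ? ? ? ?] ?]] := nzh _ hx.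
by field; side.
Qed.

Lemma tr2 k : tf2 k.+2 = tf2 k.+1 + tc1 l k.+2 * (tf2 k.+1 - tf2 k) - tc2 l k.+2 * tf1 k.+1.
Proof.
rewrite /tf2 /tf1 /r_l /tc1 /tc2 (natS2 k) (natS1 k).
have := ler0n R k; move: (k%:R) => x hx.
have [[? ? ? ? ?] [[? ? ? ? ?] ?]] := nzh _ hx.
by field; side.
Qed.

Lemma r0 (c : nat -> R) k : qf0 k.+2 = qf0 k.+1 + c k.+2 * (qf0 k.+1 - qf0 k).
Proof. by rewrite /qf0 subrr mulr0 addr0. Qed.

Lemma qbase :
  [/\ (1 : {poly R})`_0 = qf0 0, (1 : {poly R})`_1 = qf1 0, (1 : {poly R})`_2 = qf2 0,
      (1 - ((2 * (l + 1) * (l + 2)) / (2 * l + 1)) *: 'X : {poly R})`_0 = qf0 1 &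
      (1 - ((2 * (l + 1) * (l + 2)) / (2 * l + 1)) *: 'X : {poly R})`_1 = qf1 1] /\
      (1 - ((2 * (l + 1) * (l + 2)) / (2 * l + 1)) *: 'X : {poly R})`_2 = qf2 1.
Proof.
have [[? ? ? ? ?] [[? ? ? ? ?] ?]] := nzh _ (ler0n R 0).
rewrite /qf0 /qf1 /qf2 !(coefB, coef1, coefZ, coefX) /=.
by split; [split|]; field; side.
Qed.

Lemma tbase :
  [/\ (1 : {poly R})`_0 = qf0 0, (1 : {poly R})`_1 = tf1 0, (1 : {poly R})`_2 = tf2 0,
      (1 - ((l + 1) / 2) *: 'X : {poly R})`_0 = qf0 1 &
      (1 - ((l + 1) / 2) *: 'X : {poly R})`_1 = tf1 1] /\
      (1 - ((l + 1) / 2) *: 'X : {poly R})`_2 = tf2 1.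
Proof.
have [[? ? ? ? ?] [[? ? ? ? ?] ?]] := nzh _ (ler0n R 0).
rewrite /qf0 /tf1 /tf2 /r_l !(coefB, coef1, coefZ, coefX) /=.
by split; [split|]; field; side.
Qed.
End Main.

Theorem lemma3p4 (R : realFieldType) (l : R) (hl : - (1 / 2) < l)
  (m : nat) (hm : (1 <= m)%N) :
  A l 2 m =
    ((m%:R - 1) * m%:R * (m%:R + 1) * (m%:R + l) * (m%:R + l + 1) * (m%:R + l + 2)
     * (m%:R ^+ 2 + (l + 1) * m%:R
        + (4 * l ^+ 2 + 2 * l - 14) / (3 * (2 * l + 3))))
    / (2 * (2 * l + 1) * (2 * l + 5))
  /\
  At l 2 m =
    ((m%:R - 1) * m%:R * (m%:R + l) * (m%:R + l + 1) * r_l l m%:R)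
    / (24 * (2 * l + 1) * (2 * l + 3) * (2 * l + 5)).
Proof.
have [[b0 b1 b2 b3 b4] b5] := qbase _ _ hl.
have [[e0 e1 e2 e3 e4] e5] := tbase _ _ hl.
have [[_ _ a2] _] := @rec_coef _ _ _ (qc1 l) (qc2 l) _ _ _ b0 b1 b2 b3 b4 b5 (r0 _ (qc1 l)) (qr1 _ _ hl) (qr2 _ _ hl) m.
have [[_ _ d2] _] := @rec_coef _ _ _ (tc1 l) (tc2 l) _ _ _ e0 e1 e2 e3 e4 e5 (r0 _ (tc1 l)) (tr1 _ _ hl) (tr2 _ _ hl) m.
rewrite /A /At /Q /Qt a2 d2 expr2 mulrNN !mul1r.
by split.
Qed.
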